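(* For all integers $n\geq0$, $$p_{R1}(n)+\sum_{j\geq1}(-1)^j\left(p_{R1}\!\left(n-\tfrac{j(5j-3)}{2}\right)+p_{R1}\!\left(n-\tfrac{j(5j+3)}{2}\right)\right)=\begin{cases}1,&\text{if } n=5\,\frac{j(3j-1)}{2}\text{ for some even } j\in\mathbb{Z},\\-1,&\text{if } n=5\,\frac{j(3j-1)}{2}\text{ for some odd } j\in\mathbb{Z},\\0,&\text{otherwise,}\end{cases}$$ (i.e. $p_{R1}(n)-p_{R1}(n-1)-p_{R1}(n-4)+p_{R1}(n-7)+p_{R1}(n-13)-\cdots$), and $$p_{R2}(n)+\sum_{j\geq1}(-1)^j\left(p_{R2}\!\left(n-\tfrac{j(3j-1)}{2}\right)+p_{R2}\!\left(n-\tfrac{j(3j+1)}{2}\right)\right)=\begin{cases}1,&\text{if } n=\frac{j(5j-3)}{2}\text{ for some even } j\in\mathbb{Z},\\-1,&\text{if } n=\frac{j(5j-3)}{2}\text{ for some odd } j\in\mathbb{Z},\\0,&\text{otherwise,}\end{cases}$$ (i.e. $p_{R2}(n)-p_{R2}(n-1)-p_{R2}(n-2)+p_{R2}(n-5)+p_{R2}(n-7)-\cdots$).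
   Context: $p_{R1}(n)$ (resp. $p_{R2}(n)$) is the number of partitions of $n$ all of whose parts are congruent to $\pm1$ (resp. $\pm2$) modulo $5$, with value $1$ at $n=0$ and $0$ at negative arguments. The numbers $j(3j-1)/2$, $j\in\mathbb{Z}$, are the generalized pentagonal numbers and $j(5j-3)/2$, $j\in\mathbb{Z}$, are the generalized heptagonal numbers; within each family they are distinct for distinct $j$. *)

(* Defs.v *)
From HB Require Import structures.
From mathcomp Require Import all_boot all_order all_algebra.
Set Implicit Arguments. Unset Strict Implicit. Unset Printing Implicit Defensive.
Import Order.TTheory GRing.Theory Num.Theory.

(* Number of partitions of n all of whose parts satisfy P.  A partition of n
   is encoded by its multiplicity function m : part size i |-> number of
   occurrences of i; multiplicities and part sizes are at most n, so m is a
   finite function 'I_n.+1 -> 'I_n.+1.  Parts are positive integers. *)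
Definition npart (P : pred nat) (n : nat) : nat :=
  #|[set m : {ffun 'I_n.+1 -> 'I_n.+1} |
      (\sum_(i < n.+1) i * m i == n)%N &&
      [forall i : 'I_n.+1, (m i != 0 :> nat) ==> (0 < i)%N && P i]]|.

Definition npartZ (P : pred nat) (m : int) : int :=
  if (m < 0)%R then 0%R else Posz (npart P (absz m)).

Definition R1 : pred nat := fun i => (i %% 5 == 1) || (i %% 5 == 4).
Definition R2 : pred nat := fun i => (i %% 5 == 2) || (i %% 5 == 3).

Definition pR1 (m : int) : int := npartZ R1 m.
Definition pR2 (m : int) : int := npartZ R2 m.

Local Open Scope ring_scope.
(* generalized pentagonal numbers j(3j-1)/2 and heptagonal numbers j(5j-3)/2;
   the numerators are always even, so the integer division is exact *)
Definition pent (j : int) : int := ((j * (3 * j - 1)) %/ 2)%Z.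
Definition hept (j : int) : int := ((j * (5 * j - 3)) %/ 2)%Z.

(* Main.v *)
Require Import Defs.
From HB Require Import structures.
From mathcomp Require Import all_boot all_order all_algebra.
From mathcomp Require Import zify ring.
Import Order.TTheory GRing.Theory Num.Theory.
Set Implicit Arguments. Unset Strict Implicit.
Local Open Scope ring_scope.

Notation P := {poly int}.

Definition eqm (n : nat) (p q : P) := exists r : P, p - q = r * 'X^(n.+1).

Lemma eqm_refl n p : eqm n p p.
Proof. by exists 0; rewrite subrr mul0r. Qed.

Lemma eqm_sym n p q : eqm n p q -> eqm n q p.
Proof. by case=> r h; exists (- r); rewrite mulNr -h opprB. Qed.

Lemma eqm_trans n p q s : eqm n p q -> eqm n q s -> eqm n p s.
Proof.
by case=> r h [r' h']; exists (r + r'); rewrite mulrDl -h -h' addrA subrK.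
Qed.

Lemma eqm_add n p q p' q' : eqm n p p' -> eqm n q q' -> eqm n (p + q) (p' + q').
Proof.
case=> r h [r' h']; exists (r + r'); rewrite mulrDl -h -h'; ring.
Qed.

Lemma eqm_opp n p q : eqm n p q -> eqm n (- p) (- q).
Proof. by case=> r h; exists (- r); rewrite mulNr -h; ring. Qed.

Lemma eqm_mul n p q p' q' : eqm n p p' -> eqm n q q' -> eqm n (p * q) (p' * q').
Proof.
case=> r h [r' h']; exists (r * q + p' * r').
have -> : p * q - p' * q' = (p - p') * q + p' * (q - q') by ring.
by rewrite h h'; ring.
Qed.

Lemma eqm_sum n (I : Type) (r : seq I) (Pr : pred I) (F G : I -> P) :
  (forall i, Pr i -> eqm n (F i) (G i)) ->
  eqm n (\sum_(i <- r | Pr i) F i) (\sum_(i <- r | Pr i) G i).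
Proof.
move=> h; apply: (big_ind2 (eqm n)) => //; first exact: eqm_refl.
by move=> *; apply: eqm_add.
Qed.

Lemma eqm_prod n (I : Type) (r : seq I) (Pr : pred I) (F G : I -> P) :
  (forall i, Pr i -> eqm n (F i) (G i)) ->
  eqm n (\prod_(i <- r | Pr i) F i) (\prod_(i <- r | Pr i) G i).
Proof.
move=> h; apply: (big_ind2 (eqm n)) => //; first exact: eqm_refl.
by move=> *; apply: eqm_mul.
Qed.

Lemma eqm_le m n p q : (m <= n)%N -> eqm n p q -> eqm m p q.
Proof.
move=> le [r h]; exists (r * 'X^(n - m)); rewrite h -mulrA -exprD.
by congr (_ * 'X^_); lia.
Qed.

Lemma eqm_X0 n k p : (n < k)%N -> eqm n ('X^k * p) 0.
Proof.
move=> lt; exists (p * 'X^(k - n.+1)); rewrite subr0 -mulrA -exprD mulrC.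
by congr (_ * 'X^_); lia.
Qed.

Lemma eqm_coef n p q i : eqm n p q -> (i <= n)%N -> p`_i = q`_i.
Proof.
case=> r h le; apply/eqP; rewrite -subr_eq0 -coefB h coefMXn.
by have -> : (i < n.+1)%N by lia.
Qed.

Lemma eqm_cancel K n p q : eqm (K + n) ('X^K * p) ('X^K * q) -> eqm n p q.
Proof.
case=> r h; exists r; apply: (@mulIf _ ('X^K)).
  by rewrite monic_neq0 ?monicXn.
rewrite mulrBl -mulrA -exprD [_ * 'X^K]mulrC [q * _]mulrC h.
by congr (_ * 'X^_); lia.
Qed.

Lemma eqm_geom n e : (0 < e)%N ->
  eqm n ((1 - 'X^e) * \sum_(j < n.+1) 'X^(e * j)) 1.
Proof.
move=> e0.
have -> : (1 - 'X^e) * \sum_(j < n.+1) 'X^(e * j) = 1 - 'X^(e * n.+1) :> P.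
  elim: n => [|n IH]; first by rewrite big_ord1 muln0 expr0 mulr1 muln1.
  rewrite big_ord_recr /= mulrDr IH mulrBl mul1r -exprD.
  have -> : (e + e * n.+1 = e * n.+2)%N by lia.
  ring.
exists (- 'X^(e * n.+1 - n.+1)); rewrite mulNr -exprD.
have -> : (e * n.+1 - n.+1 + n.+1 = e * n.+1)%N.
  have : (n.+1 <= e * n.+1)%N by rewrite leq_pmull.
  lia.
ring.
Qed.

Lemma eqm_prod1 n (I : Type) (r : seq I) (Pr : pred I) (F : I -> P) :
  (forall i, Pr i -> eqm n (F i) 1) -> eqm n (\prod_(i <- r | Pr i) F i) 1.
Proof.
move=> h; apply: (big_ind (fun x => eqm n x 1)) => //; first exact: eqm_refl.
by move=> x y hx hy; rewrite -(mulr1 1); apply: eqm_mul.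
Qed.

Lemma eqm_1mX n i : (n < i)%N -> eqm n (1 - 'X^i) 1.
Proof.
move=> lt; rewrite -[X in eqm _ _ X]subr0; apply: eqm_add; first exact: eqm_refl.
apply: eqm_opp; rewrite -[X in eqm _ X _]mulr1; exact: eqm_X0.
Qed.

Lemma eqm_eq n p q : p = q -> eqm n p q.
Proof. by move=> ->; apply: eqm_refl. Qed.

Definition okp (Pp : pred nat) (i : nat) := (0 < i)%N && Pp i.

Definition Gn (Pp : pred nat) n : P :=
  \prod_(i < n.+1) \sum_(j < n.+1)
     (if ((j : nat) == 0)%N || okp Pp i then 'X^(i * j) else 0).

Lemma prod_if (I : finType) (c : pred I) (e : I -> nat) :
  \prod_(i : I) (if c i then 'X^(e i) else 0) =
  if [forall i, c i] then 'X^(\sum_(i : I) e i) else 0 :> P.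
Proof.
case: (boolP [forall i, c i]) => [/forallP h|].
  rewrite -prodrXr; apply: eq_bigr => i _; by rewrite h.
rewrite negb_forall => /existsP [i ni].
by rewrite (bigD1 i) //= (negbTE ni) mul0r.
Qed.

Lemma npart_coef Pp n : (npart Pp n)%:Z = (Gn Pp n)`_n.
Proof.
rewrite /Gn bigA_distr_bigA /= coef_sum /npart -sum1_card -natz.
rewrite natr_sum big_mkcond /=; apply: eq_bigr => f _.
rewrite prod_if inE; case: (boolP [forall i, _]) => /forallP h.
  rewrite coefXn.
  have -> : [forall i, (f i != 0 :> nat) ==> (0 < i)%N && Pp i].
    apply/forallP => i; apply/implyP => nz; move: (h i).
    by rewrite (negbTE nz).
  by rewrite andbT eq_sym; case: (_ == _).
rewrite coef0.
have -> : [forall i, (f i != 0 :> nat) ==> (0 < i)%N && Pp i] = false.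
  apply/negbTE/forallP => h2; apply: h => i; move: (h2 i).
  by case: (f i == 0 :> nat) => //= /implyP; apply.
by rewrite andbF.
Qed.

Definition Dp (Pp : pred nat) M : P := \prod_(0 <= i < M | okp Pp i) (1 - 'X^i).

Lemma DG Pp n : eqm n (Dp Pp n.+1 * Gn Pp n) 1.
Proof.
rewrite /Dp big_mkord big_mkcond /Gn -big_split /=.
apply: eqm_prod1 => i _.
case: (boolP (okp Pp i)) => ok.
  under eq_bigr => j _ do rewrite orbT.
  apply: eqm_geom; by case/andP: ok.
rewrite mul1r big_ord_recl /= muln0 expr0.
rewrite big1 ?addr0; first exact: eqm_refl.
by [].
Qed.

Lemma trunc (Pp : pred nat) (F : nat -> P) n M : (n < M)%N ->
  (forall i, (n < i)%N -> Pp i -> eqm n (F i) 1) ->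
  eqm n (\prod_(0 <= i < M | Pp i) F i) (\prod_(0 <= i < n.+1 | Pp i) F i).
Proof.
move=> lt h; rewrite (big_cat_nat _ (n := n.+1)) //=.
rewrite -[X in eqm _ _ X]mulr1; apply: eqm_mul; first exact: eqm_refl.
rewrite big_nat_cond; apply: eqm_prod1 => i /andP [/andP [Hi _] Pi].
by apply: h.
Qed.



Lemma Dp_trunc Pp n M : (n < M)%N -> eqm n (Dp Pp M) (Dp Pp n.+1).
Proof. by move=> lt; apply: trunc => // i hi _; apply: eqm_1mX. Qed.

Lemma Gn_coef Pp n k : (k <= n)%N -> (Gn Pp n)`_k = (npart Pp k)%:Z.
Proof.
move=> le; rewrite npart_coef; apply: (@eqm_coef k) => //.
have h2 : eqm k (Dp Pp k.+1 * Gn Pp n) 1.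
  apply: (eqm_trans (q := Dp Pp n.+1 * Gn Pp n)).
    apply: eqm_mul; last exact: eqm_refl.
    apply: eqm_sym; apply: Dp_trunc; lia.
  exact: (eqm_le le (DG Pp n)).
have h3 := DG Pp k.
have -> : Gn Pp n = Gn Pp n * 1 by rewrite mulr1.
apply: (eqm_trans (q := Gn Pp n * (Dp Pp k.+1 * Gn Pp k))).
  apply: eqm_mul; [exact: eqm_refl | exact: eqm_sym].
rewrite mulrA [Gn Pp n * _]mulrC -[X in eqm _ _ X]mul1r.
apply: eqm_mul => //; exact: eqm_refl.
Qed.

Fixpoint gb (x : P) (n k : nat) : P :=
  match n, k with
  | _, 0%N => 1
  | 0%N, _.+1 => 0
  | n'.+1, k'.+1 => gb x n' k' + x ^+ k'.+1 * gb x n' k'.+1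
  end.

Fixpoint tri (t : nat) : nat := match t with 0%N => 0%N | s.+1 => (tri s + s)%N end.

Lemma tri2 t : (2 * tri t = t * t.-1)%N.
Proof. elim: t => [|t IH] //=; case: t IH => [|t] /= IH; lia. Qed.

Lemma gb_gt x n k : (n < k)%N -> gb x n k = 0.
Proof.
elim: n k => [|n IH] [|k] //= lt.
by rewrite !IH ?mulr0 ?addr0 //; lia.
Qed.

Lemma gb_nn x n : gb x n n = 1.
Proof. by elim: n => //= n ->; rewrite gb_gt ?mulr0 ?addr0. Qed.

Lemma gb_n0 x n : gb x n 0 = 1.
Proof. by case: n. Qed.

Lemma cauchy (t x : P) n : forall y : P,
  \prod_(k < n) (t + y * x ^+ k) =
  \sum_(i < n.+1) x ^+ (tri i) * gb x n i * y ^+ i * t ^+ (n - i).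
Proof.
elim: n => [|n IH] y.
  by rewrite big_ord0 big_ord1 /= !expr0 !mulr1.
rewrite big_ord_recl /=.
under eq_bigr => k _ do rewrite /bump /= add1n exprS mulrA.
rewrite IH mulrDl.
rewrite [in RHS]big_ord_recl /= subn0 !expr0 !mulr1 mul1r.
under [in RHS]eq_bigr => i _ do rewrite /bump /= add1n mulrDr mulrDl mulrDl.
rewrite big_split /=.
rewrite !big_distrr /= [LHS]addrC [RHS]addrCA; congr (_ + _).
  apply: eq_bigr => i _; rewrite add0n subSS exprD exprMn exprS; ring.
rewrite big_ord_recl /= subn0 !expr0 !mulr1 gb_n0 !mul1r -exprS; congr (_ + _).
rewrite [in RHS]big_ord_recr /= add0n gb_gt // !mulr0 !mul0r addr0.
apply: eq_bigr => i _; rewrite /bump /= !add0n !add1n subSS.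
have -> : (n - i = (n - i.+1).+1)%N by have := ltn_ord i; lia.
rewrite [t ^+ (n - i.+1).+1]exprS exprMn; ring.
Qed.

Definition Qx (x : P) K : P := \prod_(k < K) (1 - x ^+ k.+1).

Lemma QxS x K : Qx x K.+1 = Qx x K * (1 - x ^+ K.+1).
Proof. by rewrite /Qx big_ord_recr. Qed.

Lemma gbQ x n k : (k <= n)%N -> Qx x k * Qx x (n - k) * gb x n k = Qx x n.
Proof.
elim: n k => [|n IH] [|k] //= le.
- by rewrite /Qx !big_ord0 !mulr1.
- by rewrite /Qx big_ord0 subn0 mul1r mulr1.
rewrite subSS mulrDr.
have h1 : Qx x k.+1 * Qx x (n - k) * gb x n k = (1 - x ^+ k.+1) * Qx x n.
  rewrite -(IH k) ?QxS; [ring | lia].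
case: (ltnP k n) => kn.
  have h2 : Qx x k.+1 * Qx x (n - k) * (x ^+ k.+1 * gb x n k.+1)
      = x ^+ k.+1 * (1 - x ^+ (n - k)) * Qx x n.
    have -> : (n - k = (n - k.+1).+1)%N by lia.
    rewrite -(IH k.+1 kn) [Qx x (n - k.+1).+1]QxS; ring.
  rewrite h1 h2 QxS mulrBr mulr1 -exprD.
  have -> : (k.+1 + (n - k) = n.+1)%N by lia.
  ring.
have e : k = n by lia. subst k.
by rewrite (@gb_gt x n n.+1) // !mulr0 addr0 h1 QxS mulrC.
Qed.

Lemma XaE a k : ('X^a : P) ^+ k = 'X^(a * k).
Proof. by rewrite exprM. Qed.

Lemma Qx_trunc a n K K' : (0 < a)%N -> (n <= K)%N -> (K <= K')%N ->
  eqm n (Qx 'X^a K') (Qx 'X^a K).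
Proof.
move=> a0 nK /subnK <-; elim: (K' - K)%N => [|d IH]; first exact: eqm_refl.
rewrite addSn QxS -[X in eqm _ _ X]mulr1; apply: eqm_mul => //.
rewrite XaE; apply: eqm_1mX.
have : ((d + K).+1 <= a * (d + K).+1)%N by rewrite leq_pmull.
lia.
Qed.

Lemma Qx_inv a n K : (0 < a)%N -> exists g, eqm n (Qx 'X^a K * g) 1.
Proof.
move=> a0; exists (\prod_(k < K) \sum_(j < n.+1) 'X^((a * k.+1) * j)).
rewrite /Qx -big_split /=; apply: eqm_prod1 => k _.
rewrite XaE; apply: eqm_geom; by rewrite muln_gt0 a0.
Qed.

Lemma Qgb a n M i : (0 < a)%N -> (n <= i)%N -> (i + n <= M)%N ->
  eqm n (Qx 'X^a M * gb 'X^a M i) 1.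
Proof.
move=> a0 ni iM.
have [g hg] := Qx_inv n M a0.
have e := gbQ 'X^a (_ : i <= M)%N.
have h1 : eqm n (Qx 'X^a i) (Qx 'X^a M) by apply: eqm_sym; apply: Qx_trunc => //; lia.
have h2 : eqm n (Qx 'X^a (M - i)) (Qx 'X^a M) by apply: eqm_sym; apply: Qx_trunc => //; lia.
apply: (eqm_trans (q := Qx 'X^a M * gb 'X^a M i * (Qx 'X^a M * g))).
  rewrite -[X in eqm _ X _]mulr1; apply: eqm_mul; [exact: eqm_refl | exact: eqm_sym].
apply: (eqm_trans (q := Qx 'X^a i * Qx 'X^a (M - i) * gb 'X^a M i * g)).
  have -> : Qx 'X^a M * gb 'X^a M i * (Qx 'X^a M * g) =
     Qx 'X^a M * Qx 'X^a M * gb 'X^a M i * g by ring.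
  apply: eqm_mul; last exact: eqm_refl.
  apply: eqm_mul; last exact: eqm_refl.
  by apply: eqm_mul; apply: eqm_sym.
rewrite e; [exact: hg | lia].
Qed.

Definition ep a b s := (a * tri s + b * s)%N.
Definition em a b s := (a * tri s.+1 - b * s)%N.
Definition AN a b N : P :=
  \prod_(l < N) (1 - 'X^(a * l + b)) * \prod_(l < N) (1 - 'X^(a * l + (a - b))).

Lemma triD m n : tri (m + n) = (tri m + m * n + tri n)%N.
Proof. elim: n => [|n IH]; first by rewrite addn0 muln0 !addn0. rewrite addnS /= IH; lia. Qed.

Lemma tri2' s : (2 * tri s + s = s * s)%N.
Proof. have := tri2 s; case: s => [|s] /=; lia. Qed.

Lemma sum_tri a N : (\sum_(k < N) a * k = a * tri N)%N.
Proof. elim: N => [|N IH]; first by rewrite big_ord0 muln0.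
by rewrite big_ord_recr /= IH; lia. Qed.

Lemma rev_prod a b N : (b < a)%N ->
  \prod_(k < N) (1 - 'X^(a * (N - k) - b)) =
  \prod_(l < N) (1 - 'X^(a * l + (a - b))) :> P.
Proof.
move=> ba; transitivity (\prod_(0 <= l < N) (1 - 'X^(a * l + (a - b))) : P); last by rewrite big_mkord.
rewrite big_rev_mkord subn0.
apply: eq_bigr => k _.
have kN := ltn_ord k.
move: (nat_of_ord k) kN => k' kN.
have [u ->] : exists u, N = (k'.+1 + u)%N by exists (N - k'.+1)%N; lia.
have -> : (k'.+1 + u - k' = u.+1)%N by lia.
have -> : (k'.+1 + u - k'.+1 = u)%N by lia.
congr (1 - 'X^_); rewrite mulnS; lia.
Qed.

Lemma lhs_eq a b N : (0 < b)%N -> (b < a)%N ->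
  \prod_(k < N + N) ('X^a ^+ N + (- 'X^b) * 'X^a ^+ k) =
  (-1) ^+ N * 'X^(a * tri N + b * N + a * (N * N)) * AN a b N :> P.
Proof.
move=> b0 ba; rewrite big_split_ord /=.
have e1 : \prod_(k < N) ('X^a ^+ N + - 'X^b * 'X^a ^+ (lshift N k)) =
   \prod_(k < N) ('X^(a * k) * (- 'X^b) * (1 - 'X^(a * (N - k) - b))) :> P.
  apply: eq_bigr => k _ /=; rewrite !XaE.
  have kN := ltn_ord k.
  have h : 'X^(a * N) = 'X^(a * k) * 'X^b * 'X^(a * (N - k) - b) :> P.
    rewrite -!exprD; congr ('X^_).
    have : (a <= a * (N - k))%N by rewrite leq_pmulr //; lia.
    have : (a * k + a * (N - k) = a * N)%N by rewrite -mulnDr; congr (_ * _); lia.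
    lia.
  rewrite h; ring.
have e2 : \prod_(k < N) ('X^a ^+ N + - 'X^b * 'X^a ^+ (rshift N k)) =
   \prod_(k < N) ('X^(a * N) * (1 - 'X^(a * k + b))) :> P.
  apply: eq_bigr => k _ /=; rewrite !XaE mulnDr exprD.
  have -> : 'X^(a * k + b) = 'X^(a * k) * 'X^b :> P by rewrite exprD.
  ring.
rewrite e1 e2 !big_split /= prodrXr !prodr_const !card_ord sum_tri rev_prod //.
rewrite /AN (exprNn 'X^b) -exprM -(exprM 'X b N) -mulnA !exprD.
ring.
Qed.
Lemma sum_split (F : nat -> P) N :
  \sum_(i < (N + N).+1) F i = F N + \sum_(t < N) (F (N + t.+1)%N + F (N - t.+1)%N).
Proof.
transitivity (\sum_(0 <= i < (N + N).+1) F i); first by rewrite big_mkord.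
rewrite (big_cat_nat _ (n := N)) //=; last lia.
have hN : (N < (N + N).+1)%N by lia.
rewrite (@big_ltn _ _ _ N (N + N).+1 F hN).
rewrite -(add0n N.+1) big_addn big_rev_mkord subn0 big_mkord.
have -> : ((N + N).+1 - N.+1 = N)%N by lia.
rewrite big_split /=.
have -> : \sum_(i < N) F (i + N.+1)%N = \sum_(i < N) F (N + i.+1)%N.
  by apply: eq_bigr => i _; rewrite addnS -addSn addnC.
ring.
Qed.

Lemma expo_p a b N s : (s <= N)%N ->
  (a * tri (N + s) + b * (N + s) + a * (N * (N + N - (N + s))) =
   (a * tri N + b * N + a * (N * N)) + ep a b s)%N.
Proof.
move=> sN; rewrite /ep triD.
have [u ->] : exists u, N = (s + u)%N by exists (N - s)%N; lia.
have -> : (s + u + (s + u) - (s + u + s) = u)%N by lia.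
lia.
Qed.

Lemma expo_m a b N s : (0 < s <= N)%N -> (b <= a)%N ->
  (a * tri (N - s) + b * (N - s) + a * (N * (N + N - (N - s))) =
   (a * tri N + b * N + a * (N * N)) + em a b s)%N.
Proof.
move=> /andP [s0 sN] ba; rewrite /em /=.
have h1 : (b * s <= a * s)%N by rewrite leq_mul2r ba orbT.
have h2 := tri2' s.
have h3 : (a * (2 * tri s + s) = a * (s * s))%N by rewrite h2.
have [u ->] : exists u, N = (s + u)%N by exists (N - s)%N; lia.
have -> : (s + u - s = u)%N by lia.
have -> : (s + u + (s + u) - u = s + u + s)%N by lia.
rewrite triD.
lia.
Qed.

Lemma term_eq a b N i :
  ('X^a : P) ^+ (tri i) * gb 'X^a (N + N) i * (- 'X^b) ^+ i * ('X^a ^+ N) ^+ (N + N - i) =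
  (-1) ^+ i * 'X^(a * tri i + b * i + a * (N * (N + N - i))) * gb 'X^a (N + N) i.
Proof.
rewrite !XaE (exprNn 'X^b) -(exprM 'X b i) !mulnA !exprD; ring.
Qed.

Lemma sign_sub N s : (s <= N)%N -> (-1) ^+ (N - s) = (-1) ^+ N * (-1) ^+ s :> P.
Proof. by move=> le; rewrite -signr_odd oddB // signr_addb !signr_odd. Qed.

Lemma jtp_fin a b N : (0 < b)%N -> (b < a)%N ->
  AN a b N = gb 'X^a (N + N) N + \sum_(t < N) (-1) ^+ t.+1 *
    ('X^(ep a b t.+1) * gb 'X^a (N + N) (N + t.+1) +
     'X^(em a b t.+1) * gb 'X^a (N + N) (N - t.+1)).
Proof.
move=> b0 ba.
set K := (a * tri N + b * N + a * (N * N))%N.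
have c0 : (-1) ^+ N * 'X^K != 0 :> P.
  by rewrite mulf_neq0 ?signr_eq0 // monic_neq0 ?monicXn.
apply: (mulfI c0).
rewrite -(lhs_eq N b0 ba) cauchy.
under eq_bigr => i _ do rewrite term_eq.
rewrite (sum_split (fun i => (-1) ^+ i * 'X^(a * tri i + b * i + a * (N * (N + N - i))) * gb 'X^a (N + N) i)).
rewrite mulrDr big_distrr /=; congr (_ + _).
  rewrite addnK -/K; ring.
apply: eq_bigr => t _.
have tN := ltn_ord t.
have tN' : (0 < t.+1 <= N)%N by rewrite ltn0Sn tN.
rewrite (expo_p a b tN) (expo_m tN' (ltnW ba)) -/K.
rewrite (exprD 'X K) (exprD 'X K) (exprD (-1) N) (sign_sub tN); ring.
Qed.

Definition TS a b M : P :=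
  1 + \sum_(t < M) (-1) ^+ t.+1 * ('X^(ep a b t.+1) + 'X^(em a b t.+1)).

Lemma ep_ge a b s : (0 < b)%N -> (s <= ep a b s)%N.
Proof.
move=> b0; rewrite /ep; have : (s <= b * s)%N by rewrite leq_pmull.
lia.
Qed.

Lemma em_ge a b s : (b < a)%N -> (s <= em a b s)%N.
Proof.
move=> ba; rewrite /em /=.
have h : ((b + 1) * s <= a * s)%N by rewrite leq_mul2r; apply/orP; right; lia.
have h2 : (0 <= a * tri s)%N by [].
rewrite mulnDr; lia.
Qed.

Lemma eqm_Xg n e g : (n < e)%N \/ eqm n g 1 -> eqm n ('X^e * g) 'X^e.
Proof.
case=> [lt|h].
  apply: (eqm_trans (q := 0)); first exact: eqm_X0.
  rewrite -['X^e]mulr1; apply: eqm_sym; exact: eqm_X0.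
rewrite -[X in eqm _ _ X]mulr1; apply: eqm_mul => //; exact: eqm_refl.
Qed.

Lemma jtp_mod a b n N : (0 < b)%N -> (b < a)%N -> (n + n <= N)%N ->
  eqm n (Qx 'X^a (N + N) * AN a b N) (TS a b N).
Proof.
move=> b0 ba nN; have a0 : (0 < a)%N by lia.
rewrite jtp_fin // mulrDr big_distrr /=; apply: eqm_add.
  apply: Qgb => //; lia.
apply: eqm_sum => t _.
set Q := Qx 'X^a (N + N).
have -> : Q * ((-1) ^+ t.+1 * ('X^(ep a b t.+1) * gb 'X^a (N + N) (N + t.+1) +
     'X^(em a b t.+1) * gb 'X^a (N + N) (N - t.+1))) =
   (-1) ^+ t.+1 * ('X^(ep a b t.+1) * (Q * gb 'X^a (N + N) (N + t.+1)) +
     'X^(em a b t.+1) * (Q * gb 'X^a (N + N) (N - t.+1))) by ring.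
apply: eqm_mul; first exact: eqm_refl.
have := ep_ge a t.+1 b0; have := em_ge t.+1 ba => h1 h2.
case: (leqP t.+1 n) => tn.
  apply: eqm_add; apply: eqm_Xg; right; apply: Qgb => //; lia.
apply: eqm_add; apply: eqm_Xg; left; lia.
Qed.

Lemma TS_trunc a b n M : (0 < b)%N -> (b < a)%N -> (n < M)%N ->
  eqm n (TS a b M) (TS a b n.+1).
Proof.
move=> b0 ba nM; apply: eqm_add; first exact: eqm_refl.
rewrite -!(big_mkord xpredT (fun t => (-1) ^+ t.+1 * ('X^(ep a b t.+1) + 'X^(em a b t.+1)))).
rewrite (big_cat_nat _ (n := n.+1)) //=.
rewrite -[X in eqm _ _ X]addr0; apply: eqm_add; first exact: eqm_refl.
rewrite big_nat_cond.
apply: (eqm_trans (q := \sum_(n.+1 <= i < M | (n.+1 <= i < M)%N && true) (0 : P))); last first.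
  rewrite big1_eq; exact: eqm_refl.
apply: eqm_sum => t /andP [/andP [h _] _].
rewrite -(mulr0 ((-1) ^+ t.+1)); apply: eqm_mul; first exact: eqm_refl.
rewrite -(addr0 0); apply: eqm_add; rewrite -['X^_]mulr1; apply: eqm_X0.
  have := ep_ge a t.+1 b0; lia.
have := em_ge t.+1 ba; lia.
Qed.

Lemma mod_small_eq a u r : (0 < u <= a)%N -> (0 < r <= a)%N ->
  ((u %% a == r %% a)%N) = (u == r).
Proof.
move=> /andP [u0 ua] /andP [r0 ra].
case: (ltngtP u a) ua => // [ua|ua] _; case: (ltngtP r a) ra => // [rr|rr] _;
  subst; rewrite ?modnn ?modn_small //; apply/eqP/eqP; lia.
Qed.

Lemma prod_res (G : nat -> P) a r N : (0 < r <= a)%N ->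
  \prod_(l < N) G (a * l + r)%N =
  \prod_(0 <= i < a * N + 1 | (0 < i)%N && (i %% a == r %% a)%N) G i.
Proof.
move=> hr; have a0 : (0 < a)%N by lia.
elim: N => [|N IH].
  by rewrite big_ord0 muln0 add0n big_mkcond big_nat1.
rewrite big_ord_recr /= IH [RHS](big_cat_nat _ (n := a * N + 1)) //=; last first.
  rewrite mulnS; lia.
congr (_ * _).
have e : \prod_(a * N + 1 <= i < a * N.+1 + 1 | (0 < i)%N && (i %% a == r %% a)%N) G i =
  \prod_(a * N + 1 <= i < a * N.+1 + 1 | (a * N + 1 <= i < a * N.+1 + 1)%N && (i == a * N + r)%N) G i.
  rewrite big_nat_cond [RHS]big_nat_cond; apply: eq_bigl => i.
  case: (boolP (a * N + 1 <= i < a * N.+1 + 1)%N) => //= hi.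
  have -> : i = (a * N + (i - a * N))%N by lia.
  rewrite (mulnC a N) modnMDl eqn_add2l mod_small_eq //; last by rewrite mulnS in hi; lia.
  apply/idP/idP.
    by case/andP => _ /eqP ->.
  by move/eqP => e; apply/andP; split; [lia | apply/eqP; lia].
rewrite e big_nat1_cond_eq.
have -> : (a * N + 1 <= a * N + r < a * N.+1 + 1)%N by rewrite mulnS; lia.
by [].
Qed.

Lemma res_trunc (G : nat -> P) a r N n :
  (forall i, (n < i)%N -> eqm n (G i) 1) -> (0 < r <= a)%N -> (n < a * N + 1)%N ->
  eqm n (\prod_(l < N) G (a * l + r)%N)
        (\prod_(0 <= i < n.+1 | (0 < i)%N && (i %% a == r %% a)%N) G i).
Proof.
move=> hG hr hn; rewrite prod_res //; apply: trunc => // i hi _; exact: hG.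
Qed.

Lemma Gs_trunc s n i : (0 < s)%N -> (n < i)%N -> eqm n (1 - 'X^(s * i)) 1.
Proof.
move=> s0 ni; apply: eqm_1mX; have : (i <= s * i)%N by rewrite leq_pmull.
lia.
Qed.

Lemma euler s n N : (0 < s)%N -> (n < N)%N ->
  eqm n (Qx 'X^(3 * s) (N + N) * AN (3 * s) s N)
        (\prod_(0 <= i < n.+1 | (0 < i)%N) (1 - 'X^(s * i))).
Proof.
move=> s0 nN.
set G := fun i => 1 - 'X^(s * i) : P.
have hG : forall i, (n < i)%N -> eqm n (G i) 1 by move=> i; exact: Gs_trunc.
have eQ : Qx 'X^(3 * s) (N + N) = \prod_(k < N + N) G (3 * k + 3)%N.
  apply: eq_bigr => k _; rewrite XaE /G; congr (1 - 'X^_); lia.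
have eA : AN (3 * s) s N = \prod_(l < N) G (3 * l + 1)%N * \prod_(l < N) G (3 * l + 2)%N.
  rewrite /AN; congr (_ * _); apply: eq_bigr => k _; rewrite /G; congr (1 - 'X^_); lia.
rewrite eQ eA.
have h0 := @res_trunc G 3 3 (N + N) n hG isT (_ : n < 3 * (N + N) + 1)%N.
have h1 := @res_trunc G 3 1 N n hG isT (_ : n < 3 * N + 1)%N.
have h2 := @res_trunc G 3 2 N n hG isT (_ : n < 3 * N + 1)%N.
apply: (eqm_trans (q := \prod_(0 <= i < n.+1 | (0 < i)%N && (i %% 3 == 3 %% 3)%N) G i *
   (\prod_(0 <= i < n.+1 | (0 < i)%N && (i %% 3 == 1 %% 3)%N) G i *
    \prod_(0 <= i < n.+1 | (0 < i)%N && (i %% 3 == 2 %% 3)%N) G i))).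
  apply: eqm_mul; [apply: h0 | apply: eqm_mul; [apply: h1 | apply: h2]]; lia.
rewrite [X in eqm _ _ X](bigID (fun i => i %% 3 == 0)%N) /=.
rewrite [X in eqm _ _ (_ * X)](bigID (fun i => i %% 3 == 1)%N) /=.
have e0 : forall i, ((0 < i)%N && (i %% 3 == 3 %% 3)%N) = ((0 < i)%N && (i %% 3 == 0)%N) by [].
rewrite (eq_bigl _ _ e0).
rewrite -/G; apply: eqm_eq; congr (_ * (_ * _)); apply: eq_bigl => i /=;
  case: (0 < i)%N => //=;
  by move: (ltn_pmod i (isT : (0 < 3)%N)); case: (i %% 3)%N => [|[|[|k]]].
Qed.

Definition G1 (i : nat) : P := 1 - 'X^i.

Lemma G1_trunc n i : (n < i)%N -> eqm n (G1 i) 1.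
Proof. exact: eqm_1mX. Qed.

Lemma TS_prod a b n : (0 < b)%N -> (b < a)%N ->
  eqm n (TS a b n.+1) (Qx 'X^a ((n + n).+1 + (n + n).+1) * AN a b (n + n).+1).
Proof.
move=> b0 ba; apply: eqm_sym; apply: (eqm_trans (q := TS a b (n + n).+1)).
  by apply: jtp_mod => //; lia.
by apply: TS_trunc => //; lia.
Qed.

Lemma AN51 n N : (n < N)%N -> eqm n (AN 5 1 N) (Dp R1 n.+1).
Proof.
move=> nN.
have h1 := @res_trunc G1 5 1 N n (@G1_trunc n) isT (_ : n < 5 * N + 1)%N.
have h4 := @res_trunc G1 5 4 N n (@G1_trunc n) isT (_ : n < 5 * N + 1)%N.
apply: (eqm_trans (q := \prod_(0 <= i < n.+1 | (0 < i)%N && (i %% 5 == 1 %% 5)%N) G1 i *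
    \prod_(0 <= i < n.+1 | (0 < i)%N && (i %% 5 == 4 %% 5)%N) G1 i)).
  apply: eqm_mul; [apply: h1 | apply: h4]; lia.
apply: eqm_eq; rewrite /Dp [RHS](bigID (fun i => i %% 5 == 1)%N) /=.
congr (_ * _); apply: eq_bigl => i /=; rewrite /okp /R1;
  case: (0 < i)%N => //=;
  by move: (ltn_pmod i (isT : (0 < 5)%N)); case: (i %% 5)%N => [|[|[|[|[|k]]]]].
Qed.

Lemma Q5_G5 n N : (n < N)%N ->
  eqm n (Qx 'X^5 N) (\prod_(0 <= i < n.+1 | (0 < i)%N) (1 - 'X^(5 * i))).
Proof.
move=> nN.
have -> : Qx 'X^5 N = \prod_(k < N) (fun i => 1 - 'X^(5 * i)) (1 * k + 1)%N.
  apply: eq_bigr => k _; rewrite XaE /=; congr (1 - 'X^_); lia.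
apply: (eqm_trans (@res_trunc (fun i => 1 - 'X^(5 * i)) 1 1 N n _ isT _)).
- by move=> i; apply: Gs_trunc.
- lia.
- by apply: eqm_eq; apply: eq_bigl => i /=; rewrite !modn1 eqxx andbT.
Qed.

Lemma R1_main n : eqm n (Gn R1 n * TS 5 1 n.+1) (TS 15 5 n.+1).
Proof.
set N := (n + n).+1.
have hT := @TS_prod 5 1 n isT isT.
have hA := @AN51 n N (_ : n < N)%N.
have hQ := @Q5_G5 n (N + N) (_ : n < N + N)%N.
have hE := @euler 5 n N isT (_ : n < N)%N.
have hT2 := @TS_prod 15 5 n isT isT.
have hD := DG R1 n.
apply: (eqm_trans (q := Gn R1 n * (Qx 'X^5 (N + N) * Dp R1 n.+1))).
  apply: eqm_mul; first exact: eqm_refl.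
  apply: (eqm_trans hT); apply: eqm_mul; first exact: eqm_refl.
  apply: hA; lia.
apply: (eqm_trans (q := Qx 'X^5 (N + N) * 1)).
  have -> : Gn R1 n * (Qx 'X^5 (N + N) * Dp R1 n.+1) =
            Qx 'X^5 (N + N) * (Dp R1 n.+1 * Gn R1 n) by ring.
  apply: eqm_mul => //; exact: eqm_refl.
rewrite mulr1; apply: (eqm_trans (hQ _)); first lia.
apply: eqm_sym; apply: (eqm_trans hT2); apply: hE; lia.
Qed.

Lemma Q5_G1 n N : (n < N)%N ->
  eqm n (Qx 'X^5 N) (\prod_(0 <= i < n.+1 | (0 < i)%N && (i %% 5 == 5 %% 5)%N) G1 i).
Proof.
move=> nN.
have -> : Qx 'X^5 N = \prod_(k < N) G1 (5 * k + 5)%N.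
  apply: eq_bigr => k _; rewrite XaE /G1; congr (1 - 'X^_); lia.
apply: res_trunc => //; first exact: G1_trunc.
lia.
Qed.

Lemma all_split n :
  \prod_(0 <= i < n.+1 | (0 < i)%N) (1 - 'X^(1 * i)) =
  Dp R2 n.+1 * (\prod_(0 <= i < n.+1 | (0 < i)%N && (i %% 5 == 5 %% 5)%N) G1 i * Dp R1 n.+1).
Proof.
rewrite (eq_bigr G1); last by move=> i _; rewrite mul1n.
rewrite (bigID R2) /=; congr (_ * _).
rewrite (bigID (fun i => i %% 5 == 0)%N) /=; congr (_ * _);
  apply: eq_bigl => i /=; rewrite /okp /R1 /R2;
  case: (0 < i)%N => //=;
  by move: (ltn_pmod i (isT : (0 < 5)%N)); case: (i %% 5)%N => [|[|[|[|[|k]]]]].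
Qed.

Lemma R2_main n : eqm n (Gn R2 n * TS 3 1 n.+1) (TS 5 1 n.+1).
Proof.
set N := (n + n).+1.
have hT3 := @TS_prod 3 1 n isT isT.
have hT5 := @TS_prod 5 1 n isT isT.
have hA := @AN51 n N (_ : n < N)%N.
have hQ := @Q5_G1 n (N + N) (_ : n < N + N)%N.
have hE := @euler 1 n N isT (_ : n < N)%N.
have hD := DG R2 n.
set P0 := \prod_(0 <= i < n.+1 | (0 < i)%N && (i %% 5 == 5 %% 5)%N) G1 i.
apply: (eqm_trans (q := Gn R2 n * (Dp R2 n.+1 * (P0 * Dp R1 n.+1)))).
  apply: eqm_mul; first exact: eqm_refl.
  rewrite -all_split; apply: (eqm_trans hT3); apply: hE; lia.
apply: (eqm_trans (q := 1 * (P0 * Dp R1 n.+1))).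
  rewrite [X in eqm _ X _]mulrA.
  apply: eqm_mul; last exact: eqm_refl.
  by rewrite mulrC.
rewrite mul1r; apply: eqm_sym; apply: (eqm_trans hT5).
apply: eqm_mul; [apply: hQ | apply: hA]; lia.
Qed.

Lemma coef_sign k (p : P) i : ((-1) ^+ k * p)`_i = (-1) ^+ k * p`_i.
Proof.
rewrite -signr_odd -[in RHS]signr_odd; case: (odd k).
  by rewrite !expr1 !mulN1r coefN.
by rewrite !expr0 !mul1r.
Qed.

Lemma coef_GX (G : P) Pp n e :
  (forall k, (k <= n)%N -> G`_k = (npart Pp k)%:Z) ->
  (G * 'X^e)`_n = npartZ Pp (n%:Z - e%:Z).
Proof.
move=> hG; rewrite coefMXn /npartZ.
case: (ltnP n e) => ne.
  have -> : (n%:Z - e%:Z < 0) = true by apply/idP; lia.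
  by [].
have -> : (n%:Z - e%:Z < 0) = false by apply/negbTE; rewrite -leNgt; lia.
have -> : `|n%:Z - e%:Z|%N = (n - e)%N by lia.
by rewrite hG ?leq_subr.
Qed.

Lemma coef_GTS (G : P) Pp a b M n :
  (forall k, (k <= n)%N -> G`_k = (npart Pp k)%:Z) ->
  (G * TS a b M)`_n = npartZ Pp n%:Z + \sum_(t < M) (-1) ^+ t.+1 *
     (npartZ Pp (n%:Z - (ep a b t.+1)%:Z) + npartZ Pp (n%:Z - (em a b t.+1)%:Z)).
Proof.
move=> hG; rewrite /TS mulrDr mulr1 coefD big_distrr coef_sum /=.
congr (_ + _); first by rewrite /npartZ /= hG.
apply: eq_bigr => t _.
by rewrite mulrCA coef_sign mulrDr coefD !(coef_GX _ hG).
Qed.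

Lemma coef_TS a b M n : (TS a b M)`_n = (n == 0)%:R + \sum_(t < M) (-1) ^+ t.+1 *
   ((n == ep a b t.+1)%:R + (n == em a b t.+1)%:R).
Proof.
rewrite /TS coefD coef1 coef_sum; congr (_ + _); apply: eq_bigr => t _.
by rewrite coef_sign coefD !coefXn.
Qed.

Lemma incr_inj (f : nat -> nat) : (forall t, f t < f t.+1)%N -> injective f.
Proof.
move=> h; have hm : {homo f : i j / (i < j)%N >-> (i < j)%N}.
  by apply: homo_ltn => //; apply: ltn_trans.
move=> i j e; case: (ltngtP i j) => // /hm; rewrite e ltnn //.
Qed.

Lemma sum_hit (f : nat -> nat) (c : nat -> int) M n s : injective f -> (s < M)%N ->
  f s = n -> \sum_(t < M) c t * (n == f t)%:R = c s.
Proof.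
move=> inj sM fs; rewrite (bigD1 (Ordinal sM)) //= fs eqxx mulr1 big1 ?addr0 //.
move=> t /eqP ne; have -> : (n == f t) = false.
  apply/negbTE/eqP => e; apply: ne; apply: val_inj => /=; apply: inj; lia.
by rewrite mulr0.
Qed.

Lemma sum_miss (f : nat -> nat) (c : nat -> int) M n :
  (forall t, (t < M)%N -> f t != n) -> \sum_(t < M) c t * (n == f t)%:R = 0.
Proof.
move=> h; rewrite big1 // => t _; have -> : (n == f t) = false.
  by apply/negbTE; rewrite eq_sym h.
by rewrite mulr0.
Qed.

Lemma ep_incr a b t : (0 < b)%N -> (ep a b t < ep a b t.+1)%N.
Proof. move=> b0; rewrite /ep /=; lia. Qed.

Lemma em_incr a b t : (b < a)%N -> (em a b t.+1 < em a b t.+2)%N.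
Proof.
move=> ba; rewrite /em /=.
have h : (b * t <= a * t)%N by rewrite leq_mul2r (ltnW ba) orbT.
lia.
Qed.

Lemma ep_ne_em a b s s' : (0 < b)%N -> (b < a)%N -> a != (2 * b)%N ->
  ep a b s != em a b s'.+1.
Proof.
move=> b0 ba a2b; apply/eqP; rewrite /ep /em => e.
simpl in e.
have h1 := tri2' s; have h2 := tri2' s'.
have h3 : (a * (2 * tri s + s) = a * (s * s))%N by rewrite h1.
have h4 : (a * (2 * tri s' + s') = a * (s' * s'))%N by rewrite h2.
have h5 : (b * s' <= a * s')%N by rewrite leq_mul2r (ltnW ba) orbT.
have key : ((s + s'.+1)%:Z * (a%:Z * (s%:Z - s'%:Z - 2) + 2 * b%:Z) = 0)%R.
  lia.
move: key => /eqP; rewrite mulf_eq0 => /orP [|/eqP k]; first lia.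
move/eqP: a2b => a2b.
move: k; set d := (s%:Z - s'%:Z - 2)%R => k.
have : (d <= -2 \/ d = -1 \/ 0 <= d)%R by lia.
case=> [h|[h|h]].
- have : (a%:Z * d <= a%:Z * -2)%R by rewrite ler_pM2l //; lia.
  lia.
- rewrite h in k; lia.
- have : (0 <= a%:Z * d)%R by rewrite mulr_ge0.
  lia.
Qed.

Definition eZ a b (j : int) : nat :=
  match j with Posz t => ep a b t | Negz u => em a b u.+1 end.

Lemma coef_TS2 a b M n : (TS a b M)`_n = (n == 0)%:R +
  (\sum_(t < M) (-1) ^+ t.+1 * (n == ep a b t.+1)%:R +
   \sum_(t < M) (-1) ^+ t.+1 * (n == em a b t.+1)%:R).
Proof. by rewrite coef_TS -big_split /=; congr (_ + _); apply: eq_bigr => t _; rewrite mulrDr. Qed.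

Lemma sum_missE a b n M :
  (forall t, (t < M)%N -> ep a b t.+1 != n) ->
  \sum_(t < M) (-1) ^+ t.+1 * (n == ep a b t.+1)%:R = 0 :> int.
Proof. exact: (@sum_miss (fun t => ep a b t.+1) (fun t => (-1) ^+ t.+1)). Qed.

Lemma sum_missM a b n M :
  (forall t, (t < M)%N -> em a b t.+1 != n) ->
  \sum_(t < M) (-1) ^+ t.+1 * (n == em a b t.+1)%:R = 0 :> int.
Proof. exact: (@sum_miss (fun t => em a b t.+1) (fun t => (-1) ^+ t.+1)). Qed.

Lemma sum_hitE a b n M s : (0 < b)%N -> (s < M)%N ->
  ep a b s.+1 = n -> \sum_(t < M) (-1) ^+ t.+1 * (n == ep a b t.+1)%:R = (-1) ^+ s.+1 :> int.
Proof.
move=> b0; apply: (@sum_hit (fun t => ep a b t.+1) (fun t => (-1) ^+ t.+1)).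
by apply: incr_inj => t; apply: ep_incr.
Qed.

Lemma sum_hitM a b n M s : (b < a)%N -> (s < M)%N ->
  em a b s.+1 = n -> \sum_(t < M) (-1) ^+ t.+1 * (n == em a b t.+1)%:R = (-1) ^+ s.+1 :> int.
Proof.
move=> ba; apply: (@sum_hit (fun t => em a b t.+1) (fun t => (-1) ^+ t.+1)).
by apply: incr_inj => t; apply: em_incr.
Qed.

Lemma TS_hit a b n j : (0 < b)%N -> (b < a)%N -> a != (2 * b)%N ->
  n = eZ a b j -> (TS a b n.+1)`_n = (-1) ^+ `|j|%N.
Proof.
move=> b0 ba a2b; rewrite coef_TS2.
case: j => [[|s]|u] /= ->.
- have -> : ep a b 0 = 0%N by rewrite /ep /= !muln0.
  rewrite eqxx sum_missE; last first.
    by move=> t _; have := ep_ge a t.+1 b0; move=> h; apply/eqP; lia.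
  rewrite sum_missM; last first.
    by move=> t _; have := em_ge t.+1 ba; move=> h; apply/eqP; lia.
  by rewrite !addr0.
- have hs := ep_ge a s.+1 b0.
  have -> : (ep a b s.+1 == 0)%N = false by apply/eqP; lia.
  rewrite (@sum_hitE _ _ _ _ s) //; last lia.
  rewrite sum_missM; last first.
    by move=> t _; rewrite eq_sym; apply: ep_ne_em.
  by rewrite add0r addr0.
- have hs := em_ge u.+1 ba.
  have -> : (em a b u.+1 == 0)%N = false by apply/eqP; lia.
  rewrite sum_missE; last first.
    by move=> t _; apply: ep_ne_em.
  rewrite (@sum_hitM _ _ _ _ u) //; last lia.
  by rewrite add0r add0r.
Qed.

Lemma TS_miss a b n : (forall j, n <> eZ a b j) -> (TS a b n.+1)`_n = 0.
Proof.
move=> h; rewrite coef_TS2.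
have -> : (n == 0)%N = false by apply/eqP => e; apply: (h 0); rewrite e /= /ep /= !muln0.
rewrite sum_missE; last first.
  by move=> t _; apply/eqP => e; apply: (h (Posz t.+1)).
rewrite sum_missM; last first.
  by move=> t _; apply/eqP => e; apply: (h (Negz t)).
by rewrite !addr0.
Qed.

Lemma divz2 (x : int) (m : nat) : x = 2 * m%:Z -> (x %/ 2)%Z = m%:Z.
Proof. by move=> ->; rewrite mulKz. Qed.

Lemma e51p (j : nat) : ((j%:Z * (5 * j%:Z - 3)) %/ 2)%Z = (ep 5 1 j)%:Z.
Proof. apply: divz2; rewrite /ep; have := tri2' j; lia. Qed.

Lemma e51m (j : nat) : ((j%:Z * (5 * j%:Z + 3)) %/ 2)%Z = (em 5 1 j)%:Z.
Proof. apply: divz2; rewrite /em /=; have := tri2' j; lia. Qed.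

Lemma e31p (j : nat) : ((j%:Z * (3 * j%:Z - 1)) %/ 2)%Z = (ep 3 1 j)%:Z.
Proof. apply: divz2; rewrite /ep; have := tri2' j; lia. Qed.

Lemma e31m (j : nat) : ((j%:Z * (3 * j%:Z + 1)) %/ 2)%Z = (em 3 1 j)%:Z.
Proof. apply: divz2; rewrite /em /=; have := tri2' j; lia. Qed.

Lemma hept_eZ j : hept j = (eZ 5 1 j)%:Z.
Proof.
rewrite /hept; case: j => [t|u] /=; first exact: e51p.
apply: divz2; rewrite NegzE /em /=; have := tri2' u; lia.
Qed.

Lemma pent_eZ j : 5 * pent j = (eZ 15 5 j)%:Z.
Proof.
rewrite /pent; case: j => [t|u] /=.
  rewrite e31p /ep; lia.
rewrite (@divz2 _ (em 3 1 u.+1)); first by rewrite /em /=; lia.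
rewrite NegzE /em /=; have := tri2' u; lia.
Qed.

Lemma stmt_sum (n : nat) (F : nat -> int) :
  \sum_(1 <= j < n.+2) F j = \sum_(t < n.+1) F t.+1.
Proof. by rewrite big_add1 /= big_mkord. Qed.

Lemma L1_eq n :
  pR1 n%:Z + \sum_(1 <= j < n.+2)
        (-1) ^+ j * (pR1 (n%:Z - ((j%:Z * (5 * j%:Z - 3)) %/ 2)%Z)
                     + pR1 (n%:Z - ((j%:Z * (5 * j%:Z + 3)) %/ 2)%Z))
  = (TS 15 5 n.+1)`_n.
Proof.
rewrite -(eqm_coef (R1_main n) (leqnn n)).
rewrite (coef_GTS _ _ _ (fun k => @Gn_coef R1 n k)) stmt_sum.
congr (_ + _); apply: eq_bigr => t _; by rewrite e51p e51m.
Qed.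

Lemma L2_eq n :
  pR2 n%:Z + \sum_(1 <= j < n.+2)
        (-1) ^+ j * (pR2 (n%:Z - ((j%:Z * (3 * j%:Z - 1)) %/ 2)%Z)
                     + pR2 (n%:Z - ((j%:Z * (3 * j%:Z + 1)) %/ 2)%Z))
  = (TS 5 1 n.+1)`_n.
Proof.
rewrite -(eqm_coef (R2_main n) (leqnn n)).
rewrite (coef_GTS _ _ _ (fun k => @Gn_coef R2 n k)) stmt_sum.
congr (_ + _); apply: eq_bigr => t _; by rewrite e31p e31m.
Qed.

Lemma sign_even (j : int) : (2 %| j)%Z -> (-1) ^+ `|j|%N = 1 :> int.
Proof. by rewrite dvdzE /= dvdn2 -signr_odd => /negbTE ->. Qed.

Lemma sign_odd (j : int) : ~~ (2 %| j)%Z -> (-1) ^+ `|j|%N = -1 :> int.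
Proof. by rewrite dvdzE /= dvdn2 negbK -signr_odd => ->. Qed.

Lemma cases a b (n : nat) (f : int -> int) (L : int) :
  (0 < b)%N -> (b < a)%N -> a != (2 * b)%N ->
  (forall j, f j = (eZ a b j)%:Z) -> L = (TS a b n.+1)`_n ->
  [/\ (forall j : int, (2 %| j)%Z -> n%:Z = f j -> L = 1),
      (forall j : int, ~~ (2 %| j)%Z -> n%:Z = f j -> L = -1) &
      ((forall j : int, n%:Z <> f j) -> L = 0)].
Proof.
move=> b0 ba a2b hf ->; split.
- move=> j ej; rewrite hf => /eqP; rewrite eqz_nat => /eqP e.
  by rewrite (TS_hit b0 ba a2b e) sign_even.
- move=> j ej; rewrite hf => /eqP; rewrite eqz_nat => /eqP e.
  by rewrite (TS_hit b0 ba a2b e) sign_odd.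
- move=> h; apply: TS_miss => j e; apply: (h j); by rewrite hf e.
Qed.


Unset Implicit Arguments.

Theorem corollary1 (n : nat) :
  (let L1 := pR1 n%:Z + \sum_(1 <= j < n.+2)
        (-1) ^+ j * (pR1 (n%:Z - ((j%:Z * (5 * j%:Z - 3)) %/ 2)%Z)
                     + pR1 (n%:Z - ((j%:Z * (5 * j%:Z + 3)) %/ 2)%Z)) in
   [/\ (forall j : int, (2 %| j)%Z -> n%:Z = 5 * pent j -> L1 = 1),
       (forall j : int, ~~ (2 %| j)%Z -> n%:Z = 5 * pent j -> L1 = -1) &
       ((forall j : int, n%:Z <> 5 * pent j) -> L1 = 0)])
  /\
  (let L2 := pR2 n%:Z + \sum_(1 <= j < n.+2)
        (-1) ^+ j * (pR2 (n%:Z - ((j%:Z * (3 * j%:Z - 1)) %/ 2)%Z)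
                     + pR2 (n%:Z - ((j%:Z * (3 * j%:Z + 1)) %/ 2)%Z)) in
   [/\ (forall j : int, (2 %| j)%Z -> n%:Z = hept j -> L2 = 1),
       (forall j : int, ~~ (2 %| j)%Z -> n%:Z = hept j -> L2 = -1) &
       ((forall j : int, n%:Z <> hept j) -> L2 = 0)]).
Proof.
split.
- exact: (@cases 15 5 n (fun j => 5 * pent j) _ isT isT isT pent_eZ (L1_eq n)).
- exact: (@cases 5 1 n hept _ isT isT isT hept_eZ (L2_eq n)).
Qed.
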